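(* Let $(\pi_\rho,V_\rho)$ be an irreducible unitary representation of $Spin(n)$ and $V_\rho\otimes\mathbf{R}^n=\bigoplus_{k=0}^N V_{\lambda_k}$ its orthogonal decomposition into irreducible submodules. Then for every $k$, every $u\in\mathbf{R}^n$ and every orthonormal basis $\{e_i\}_{i=1}^n$ of $\mathbf{R}^n$, $$-\frac14\sum_{i=1}^n p^\rho_{\lambda_k}(e_i)\,\pi_\rho([e_i,u])=m(\lambda_k)\,p^\rho_{\lambda_k}(u),$$ where $[e_i,u]=e_iu-ue_i\in\mathfrak{spin}(n)$ is computed in $Cl_n$.
   Context: $Cl_n$ is the real Clifford algebra of $\mathbf{R}^n$ with $xy+yx=-2\langle x,y\rangle$; $\mathfrak{spin}(n)=\mathrm{span}\{[e_k,e_l]\}\subset Cl_n$, $Spin(n)=\exp\mathfrak{spin}(n)$, $\pi_{\mathrm{Ad}}(g)x=gxg^{-1}$ on $\mathbf{R}^n$, infinitesimally $\pi_{\mathrm{Ad}}(a)x=[a,x]$. $\pi_\rho$ also denotes the infinitesimal representation. $V_\rho\otimes\mathbf{R}^n$ carries $\pi_\rho\otimes\pi_{\mathrm{Ad}}$ and the tensor inner product; its irreducible constituents have multiplicity one and are mutually orthogonal; $\Pi^\rho_{\lambda_k}$ is the orthogonal projection onto $V_{\lambda_k}$, and the Clifford homomorphism is $p^\rho_{\lambda_k}(u)\phi:=\Pi^\rho_{\lambda_k}(\phi\otimes u)$. The conformal weight $m(\lambda_k)$ is the scalar by which the operator $\widehat C=\frac1{32}\sum_{i,j}\pi_\rho([e_i,e_j])\otimes\pi_{\mathrm{Ad}}([e_i,e_j])$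 acts on $V_{\lambda_k}$; explicitly $m(\lambda_k)=\frac12\big(n-\|\delta+\lambda_k\|^2+\|\delta+\rho\|^2-1\big)$, where $\delta$ is half the sum of positive roots and the norm is the standard Euclidean one on weights. *)

(* Defs.v *)
(* Complex scalars: an arbitrary numClosedFieldType C
   (e.g. algC or R[i]); real numbers are the elements with [\is Num.real]. *)
From HB Require Import structures.
From mathcomp Require Import all_boot all_order all_algebra.
Set Implicit Arguments. Unset Strict Implicit. Unset Printing Implicit Defensive.
Import Order.TTheory GRing.Theory Num.Theory.
Local Open Scope ring_scope.

Definition real_mx (C : numClosedFieldType) (p q : nat) (A : 'M[C]_(p, q)) : Prop :=
  forall i j, A i j \is Num.real.

Definition adjmx (C : numClosedFieldType) (p q : nat) (A : 'M[C]_(p, q)) : 'M[C]_(q, p) :=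
  (map_mx Num.conj A)^T.

(* so(n): real skew-symmetric n x n matrices.  spin(n) is identified with
   so(n) through the (injective) infinitesimal adjoint representation
   pi_Ad : a |-> [a, .] ; thus pi_Ad is the identity in this model. *)
Definition so_mx (C : numClosedFieldType) (n : nat) (X : 'M[C]_n) : Prop :=
  real_mx X /\ X^T = - X.

(* pi_Ad([x,y]) for x y in R^n, where [x,y] = xy - yx is computed in Cl_n
   with xy + yx = -2<x,y>:  [[x,y], z] = 4(<x,z> y - <y,z> x).
   As a matrix acting on column vectors: 4 (y x^T - x y^T). *)
Definition clif_br (C : numClosedFieldType) (n : nat) (x y : 'cV[C]_n) : 'M[C]_n :=
  (4 : C) *: (y *m x^T - x *m y^T).

Definition std_e (C : numClosedFieldType) (n : nat) (i : 'I_n) : 'cV[C]_n :=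
  delta_mx i 0.

Definition orthonormal_basis (C : numClosedFieldType) (n : nat)
    (e : 'I_n -> 'cV[C]_n) : Prop :=
  (forall i, real_mx (e i)) /\
  (forall i j, (e i)^T *m e j = ((i == j)%:R : C)%:M).

Definition spin_rep (C : numClosedFieldType) (n d : nat)
    (pi : 'M[C]_n -> 'M[C]_d) : Prop :=
  (forall X Y, so_mx X -> so_mx Y -> pi (X + Y) = pi X + pi Y) /\
  (forall (r : C) X, r \is Num.real -> so_mx X -> pi (r *: X) = r *: pi X) /\
  (forall X Y, so_mx X -> so_mx Y ->
     pi (X *m Y - Y *m X) = pi X *m pi Y - pi Y *m pi X).

(* unitary: the infinitesimal action is skew-Hermitian *)
Definition unitary_rep (C : numClosedFieldType) (n d : nat)
    (pi : 'M[C]_n -> 'M[C]_d) : Prop :=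
  forall X, so_mx X -> adjmx (pi X) = - pi X.

Definition irreducible_rep (C : numClosedFieldType) (n d : nat)
    (pi : 'M[C]_n -> 'M[C]_d) : Prop :=
  (0 < d)%N /\
  forall U : {vspace 'cV[C]_d},
    (forall X v, so_mx X -> v \in U -> pi X *m v \in U) ->
    U = 0%VS \/ U = fullv.

(* V (x) R^n is modelled as 'M[C]_(d, n): phi (x) u = phi *m u^T, and
   (A (x) B) M = A *m M *m B^T.  The infinitesimal action of
   pi_rho (x) pi_Ad on it: *)
Definition tens_act (C : numClosedFieldType) (n d : nat)
    (pi : 'M[C]_n -> 'M[C]_d) (X : 'M[C]_n) (M : 'M[C]_(d, n)) : 'M[C]_(d, n) :=
  pi X *m M + M *m X^T.

Definition mx_inner (C : numClosedFieldType) (p q : nat) (M N : 'M[C]_(p, q)) : C :=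
  \sum_(i < p) \sum_(j < q) Num.conj (M i j) * N i j.

Definition invariant_sub (C : numClosedFieldType) (n d : nat)
    (pi : 'M[C]_n -> 'M[C]_d) (U : {vspace 'M[C]_(d, n)}) : Prop :=
  forall X w, so_mx X -> w \in U -> tens_act pi X w \in U.

Definition irreducible_submod (C : numClosedFieldType) (n d : nat)
    (pi : 'M[C]_n -> 'M[C]_d) (W : {vspace 'M[C]_(d, n)}) : Prop :=
  W != 0%VS /\ invariant_sub pi W /\
  forall U : {vspace 'M[C]_(d, n)}, (U <= W)%VS -> invariant_sub pi U ->
    U = 0%VS \/ U = W.

Definition orth_decomp (C : numClosedFieldType) (n d N : nat)
    (pi : 'M[C]_n -> 'M[C]_d) (W : 'I_N.+1 -> {vspace 'M[C]_(d, n)}) : Prop :=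
  (\sum_(k < N.+1) W k)%VS = fullv /\
  (forall k l, k != l -> forall v w, v \in W k -> w \in W l -> mx_inner v w = 0) /\
  (forall k, irreducible_submod pi (W k)).

Definition is_orth_proj (C : numClosedFieldType) (p q : nat)
    (W : {vspace 'M[C]_(p, q)}) (P : 'M[C]_(p, q) -> 'M[C]_(p, q)) : Prop :=
  forall w, P w \in W /\ forall v, v \in W -> mx_inner v (w - P w) = 0.

(* C^ = 1/32 sum_{i,j} pi_rho([e_i,e_j]) (x) pi_Ad([e_i,e_j]) *)
Definition Chat (C : numClosedFieldType) (n d : nat)
    (pi : 'M[C]_n -> 'M[C]_d) (M : 'M[C]_(d, n)) : 'M[C]_(d, n) :=
  (32 : C)^-1 *: \sum_(i < n) \sum_(j < n)
     (pi (clif_br (std_e C i) (std_e C j)) *m M *m (clif_br (std_e C i) (std_e C j))^T).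

Definition clif_hom (C : numClosedFieldType) (n d : nat)
    (P : 'M[C]_(d, n) -> 'M[C]_(d, n)) (u : 'cV[C]_n) (phi : 'cV[C]_d) : 'M[C]_(d, n) :=
  P (phi *m u^T).

(* Main.v *)
Require Import Defs.
From HB Require Import structures.
From mathcomp Require Import all_boot all_order all_algebra ring.
Import GRing.Theory Num.Theory.
Local Open Scope ring_scope.

Lemma inner_self (C : numClosedFieldType) p q (v : 'M[C]_(p, q)) :
  mx_inner v v = 0 -> v = 0.
Proof.
rewrite /mx_inner => H.
have ge : forall i j, 0 <= Num.conj (v i j) * v i j.
  by move=> i j; rewrite mulrC -normCK exprn_ge0.
apply/matrixP => i j; rewrite mxE.
have H1 := psumr_eq0P (fun i _ => sumr_ge0 _ (fun j _ => ge i j)) H (i:=i) isT.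
have H2 := psumr_eq0P (fun j _ => ge i j) H1 (i:=j) isT.
by move: H2; rewrite mulrC -normCK => /eqP; rewrite expf_eq0 /= normr_eq0 => /eqP.
Qed.

Lemma inner0r (C : numClosedFieldType) p q (v : 'M[C]_(p, q)) : mx_inner v 0 = 0.
Proof. by rewrite /mx_inner big1 // => i _; rewrite big1 // => j _; rewrite mxE mulr0. Qed.

Lemma innerDr (C : numClosedFieldType) p q (v x y : 'M[C]_(p, q)) :
  mx_inner v (x + y) = mx_inner v x + mx_inner v y.
Proof.
rewrite /mx_inner -big_split; apply eq_bigr => i _.
rewrite -big_split; apply eq_bigr => j _; by rewrite mxE mulrDr.
Qed.

Lemma innerZr (C : numClosedFieldType) p q (v x : 'M[C]_(p, q)) a :
  mx_inner v (a *: x) = a * mx_inner v x.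
Proof.
rewrite /mx_inner mulr_sumr; apply eq_bigr => i _.
rewrite mulr_sumr; apply eq_bigr => j _; by rewrite mxE mulrCA.
Qed.

Lemma innerBr (C : numClosedFieldType) p q (v x y : 'M[C]_(p, q)) :
  mx_inner v (x - y) = mx_inner v x - mx_inner v y.
Proof. by rewrite innerDr -scaleN1r innerZr mulN1r. Qed.

Lemma inner_sumr (C : numClosedFieldType) p q (v : 'M[C]_(p, q)) I (r : seq I) F :
  mx_inner v (\sum_(i <- r) F i) = \sum_(i <- r) mx_inner v (F i).
Proof.
elim: r => [|a r IH]; first by rewrite !big_nil inner0r.
by rewrite !big_cons innerDr IH.
Qed.

Lemma proj_uniq (C : numClosedFieldType) p q (W : {vspace 'M[C]_(p, q)}) P x z :
  is_orth_proj W P -> z \in W -> (forall v, v \in W -> mx_inner v (x - z) = 0) ->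
  P x = z.
Proof.
move=> hP zW Hz; have [PW Po] := hP x.
apply/eqP; rewrite -subr_eq0; apply/eqP; apply: inner_self.
have wW : P x - z \in W by rewrite rpredB.
have -> : mx_inner (P x - z) (P x - z) = mx_inner (P x - z) ((x - z) - (x - P x)).
  congr mx_inner.
  by rewrite opprB (addrC (x - z)) addrA subrK.
by rewrite innerBr Hz ?Po // subrr.
Qed.

Lemma proj_sum (C : numClosedFieldType) p q (W : {vspace 'M[C]_(p, q)}) P
  I (r : seq I) F :
  is_orth_proj W P -> P (\sum_(i <- r) F i) = \sum_(i <- r) P (F i).
Proof.
move=> hP; apply: proj_uniq => //; first by apply: rpred_sum => i _; case: (hP (F i)).
move=> v vW; rewrite -sumrB inner_sumr big1 // => i _.
by case: (hP (F i)) => _ ->.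
Qed.

Lemma proj_scale (C : numClosedFieldType) p q (W : {vspace 'M[C]_(p, q)}) P a x :
  is_orth_proj W P -> P (a *: x) = a *: P x.
Proof.
move=> hP; have [PW Po] := hP x; apply: proj_uniq => //; first by rewrite rpredZ.
by move=> v vW; rewrite -scalerBr innerZr Po // mulr0.
Qed.

Lemma so0 (C : numClosedFieldType) n : so_mx (0 : 'M[C]_n).
Proof. by split; [move=> i j; rewrite mxE rpred0 | rewrite trmx0 oppr0]. Qed.

Lemma soD (C : numClosedFieldType) n (X Y : 'M[C]_n) :
  so_mx X -> so_mx Y -> so_mx (X + Y).
Proof.
move=> [rX tX] [rY tY]; split; first by move=> i j; rewrite mxE rpredD.
by rewrite linearD /= tX tY opprD.
Qed.

Lemma soZ (C : numClosedFieldType) n (c : C) (X : 'M[C]_n) :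
  c \is Num.real -> so_mx X -> so_mx (c *: X).
Proof.
move=> rc [rX tX]; split; first by move=> i j; rewrite mxE rpredM.
by rewrite linearZ /= tX scalerN.
Qed.

Lemma so_sum (C : numClosedFieldType) n I (r : seq I) (c : I -> C) (X : I -> 'M[C]_n) :
  (forall i, c i \is Num.real) -> (forall i, so_mx (X i)) ->
  so_mx (\sum_(i <- r) c i *: X i).
Proof.
move=> rc sX; elim: r => [|a r IH]; first by rewrite big_nil; apply: so0.
by rewrite big_cons; apply: soD => //; apply: soZ.
Qed.

Lemma pi0 (C : numClosedFieldType) n d (pi : 'M[C]_n -> 'M[C]_d) :
  spin_rep pi -> pi 0 = 0.
Proof.
move=> [_ [hZ _]].
have -> : (0 : 'M[C]_n) = 0 *: 0 by rewrite scale0r.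
by rewrite hZ ?scale0r ?rpred0 //; apply: so0.
Qed.

Lemma piN (C : numClosedFieldType) n d (pi : 'M[C]_n -> 'M[C]_d) X :
  spin_rep pi -> so_mx X -> pi (- X) = - pi X.
Proof.
move=> [_ [hZ _]] sX.
by rewrite -scaleN1r hZ ?scaleN1r // rpredN rpred1.
Qed.

Lemma pi_sum (C : numClosedFieldType) n d (pi : 'M[C]_n -> 'M[C]_d)
  I (r : seq I) (c : I -> C) (X : I -> 'M[C]_n) :
  spin_rep pi -> (forall i, c i \is Num.real) -> (forall i, so_mx (X i)) ->
  pi (\sum_(i <- r) c i *: X i) = \sum_(i <- r) c i *: pi (X i).
Proof.
move=> hpi rc sX; have [hD [hZ _]] := hpi.
elim: r => [|a r IH]; first by rewrite !big_nil pi0.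
rewrite !big_cons hD; [by rewrite hZ // IH | exact: soZ | exact: so_sum].
Qed.

Lemma so_br (C : numClosedFieldType) n (x y : 'cV[C]_n) :
  real_mx x -> real_mx y -> so_mx (clif_br x y).
Proof.
move=> rx ry; split.
  move=> i j; rewrite !mxE rpredM ?rpredB //; first by rewrite realn.
    by apply: rpred_sum => k _; rewrite !mxE rpredM.
  by apply: rpred_sum => k _; rewrite !mxE rpredM.
by rewrite /clif_br linearZ /= linearB /= !trmx_mul !trmxK -scalerN opprB.
Qed.

Lemma br_anti (C : numClosedFieldType) n (x y : 'cV[C]_n) :
  clif_br y x = - clif_br x y.
Proof. by rewrite /clif_br -scalerN opprB. Qed.

Lemma brDl (C : numClosedFieldType) n (x1 x2 y : 'cV[C]_n) :
  clif_br (x1 + x2) y = clif_br x1 y + clif_br x2 y.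
Proof.
by rewrite /clif_br -scalerDr; congr (_ *: _); rewrite linearD /= mulmxDr mulmxDl opprD addrACA.
Qed.

Lemma brZl (C : numClosedFieldType) n (c : C) (x y : 'cV[C]_n) :
  clif_br (c *: x) y = c *: clif_br x y.
Proof.
by rewrite /clif_br linearZ /= -scalemxAr -scalemxAl -scalerBr !scalerA mulrC.
Qed.

Lemma br0l (C : numClosedFieldType) n (y : 'cV[C]_n) : clif_br 0 y = 0.
Proof. by rewrite /clif_br trmx0 mulmx0 mul0mx subrr scaler0. Qed.

Lemma br_suml (C : numClosedFieldType) n I (r : seq I) (c : I -> C) (x : I -> 'cV[C]_n) y :
  clif_br (\sum_(i <- r) c i *: x i) y = \sum_(i <- r) c i *: clif_br (x i) y.
Proof.
elim: r => [|a r IH]; first by rewrite !big_nil br0l.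
by rewrite !big_cons brDl brZl IH.
Qed.

Lemma std_real (C : numClosedFieldType) n (i : 'I_n) : real_mx (std_e C i).
Proof. by move=> a b; rewrite mxE realn. Qed.

Lemma col_decomp (C : numClosedFieldType) n (x : 'cV[C]_n) :
  x = \sum_a x a 0 *: std_e C a.
Proof.
rewrite {1}(matrix_sum_delta x); apply eq_bigr => a _.
by rewrite big_ord1.
Qed.

Lemma L (C : numClosedFieldType) n d (pi : 'M[C]_n -> 'M[C]_d) (x y : 'cV[C]_n) :
  spin_rep pi -> real_mx x -> real_mx y ->
  pi (clif_br x y) = \sum_a x a 0 *: pi (clif_br (std_e C a) y).
Proof.
move=> hpi rx ry; rewrite {1}(@col_decomp C n x) br_suml pi_sum //.
by move=> a; apply: so_br => //; apply: std_real.
Qed.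

Lemma orth_sum (C : numClosedFieldType) n (e : 'I_n -> 'cV[C]_n) :
  orthonormal_basis e -> forall a, \sum_i e i a 0 *: e i = std_e C a.
Proof.
move=> [re oe] a.
pose E : 'M[C]_n := \matrix_(b, i) e i b 0.
have h1 : E^T *m E = 1%:M.
  apply/matrixP => i j; rewrite !mxE.
  have := congr1 (fun M : 'M[C]_1 => M 0 0) (oe i j); rewrite /= !mxE eqxx mulr1n => <-.
  by apply eq_bigr => b _; rewrite !mxE.
have h2 := mulmx1C h1.
apply/matrixP => b z; rewrite ord1 summxE !mxE.
have := congr1 (fun M : 'M[C]_n => M b a) h2; rewrite !mxE eqxx andbT => <-.
by apply eq_bigr => i _; rewrite !mxE mulrC.
Qed.

Lemma basis_indep (C : numClosedFieldType) n d (pi : 'M[C]_n -> 'M[C]_d)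
  (u : 'cV[C]_n) (e : 'I_n -> 'cV[C]_n) (phi : 'cV[C]_d) :
  spin_rep pi -> real_mx u -> orthonormal_basis e ->
  \sum_i pi (clif_br (e i) u) *m phi *m (e i)^T =
  \sum_a pi (clif_br (std_e C a) u) *m phi *m (std_e C a)^T.
Proof.
move=> hpi ru he; have [re _] := he.
transitivity (\sum_i \sum_a e i a 0 *: (pi (clif_br (std_e C a) u) *m phi *m (e i)^T)).
  apply eq_bigr => i _; rewrite (L _ _ _ _ _ _ hpi (re i) ru) !mulmx_suml.
  by apply eq_bigr => a _; rewrite -!scalemxAl.
rewrite exchange_big; apply eq_bigr => a _ /=.
rewrite -(orth_sum _ _ _ he a) linear_sum /= mulmx_sumr; apply eq_bigr => i _.
by rewrite linearZ /= scalemxAr.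
Qed.

Lemma sTu (C : numClosedFieldType) n (u : 'cV[C]_n) i :
  (std_e C i)^T *m u = (u i 0)%:M.
Proof.
rewrite /std_e trmx_delta -rowE; apply/matrixP => a b.
by rewrite !ord1 !mxE eqxx mulr1n.
Qed.

Lemma Bu (C : numClosedFieldType) n (u : 'cV[C]_n) i j :
  clif_br (std_e C i) (std_e C j) *m u =
  4 *: (u i 0 *: std_e C j - u j 0 *: std_e C i).
Proof.
by rewrite /clif_br -scalemxAl mulmxBl -!mulmxA !sTu !mul_mx_scalar.
Qed.

Lemma Chat_comp (C : numClosedFieldType) n d (pi : 'M[C]_n -> 'M[C]_d)
  (u : 'cV[C]_n) (phi : 'cV[C]_d) :
  spin_rep pi -> real_mx u ->
  Chat pi (phi *m u^T) =
  - (4:C)^-1 *: \sum_a pi (clif_br (std_e C a) u) *m phi *m (std_e C a)^T.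
Proof.
move=> hpi ru.
set s := @std_e C n.
pose Q (i j : 'I_n) := pi (clif_br (s i) (s j)) *m phi.
pose T := \sum_i \sum_j u i 0 *: (Q i j *m (s j)^T).
pose T' := \sum_i \sum_j u j 0 *: (Q i j *m (s i)^T).
have hterm : forall i j, pi (clif_br (s i) (s j)) *m (phi *m u^T) *m (clif_br (s i) (s j))^T
   = 4 *: (u i 0 *: (Q i j *m (s j)^T) - u j 0 *: (Q i j *m (s i)^T)).
  move=> i j; rewrite mulmxA -mulmxA -trmx_mul Bu.
  rewrite linearZ /= linearB /= !linearZ /=; congr (_ *: _).
  by rewrite mulmxDr -!scalemxAr mulmxN.
have hsum : \sum_i \sum_j pi (clif_br (s i) (s j)) *m (phi *m u^T) *m (clif_br (s i) (s j))^T
   = 4 *: (T - T').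
  rewrite /T /T' -sumrB scaler_sumr; apply eq_bigr => i _.
  rewrite -sumrB scaler_sumr; apply eq_bigr => j _; exact: hterm.
have hT' : T' = - T.
  rewrite /T' /T exchange_big -sumrN; apply eq_bigr => a _ /=.
  rewrite -sumrN; apply eq_bigr => b _ /=.
  rewrite /Q br_anti piN //; last by apply: so_br; apply: std_real.
  by rewrite mulNmx mulNmx scalerN.
have hT : T = - \sum_a pi (clif_br (s a) u) *m phi *m (s a)^T.
  rewrite /T exchange_big -sumrN; apply eq_bigr => j _ /=.
  rewrite (br_anti _ _ u) piN //; last by apply: so_br => //; apply: std_real.
  rewrite (L _ _ _ _ _ _ hpi ru (std_real _ _ j)) !mulNmx !mulmx_suml.
  by rewrite opprK; apply eq_bigr => i _; rewrite /Q -!scalemxAl.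
rewrite /Chat (_ : \sum_(i < n) _ = 4 *: (T - T')); last exact: hsum.
rewrite hT' opprK hT.
set S := \sum_a _.
rewrite -opprD -mulr2n -scaler_nat -scaleNr !scalerA; congr (_ *: _).
field; by [].
Qed.

Lemma ChatD (C : numClosedFieldType) n d (pi : 'M[C]_n -> 'M[C]_d) x y :
  Chat pi (x + y) = Chat pi x + Chat pi y.
Proof.
rewrite /Chat -scalerDr -big_split; congr (_ *: _); apply eq_bigr => i _.
rewrite -big_split; apply eq_bigr => j _ /=; by rewrite mulmxDr mulmxDl.
Qed.

Lemma Chat0 (C : numClosedFieldType) n d (pi : 'M[C]_n -> 'M[C]_d) :
  Chat pi 0 = 0.
Proof.
rewrite /Chat big1 ?scaler0 // => i _; rewrite big1 // => j _.
by rewrite mulmx0 mul0mx.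
Qed.

Lemma Chat_sum (C : numClosedFieldType) n d (pi : 'M[C]_n -> 'M[C]_d) I (r : seq I) F :
  Chat pi (\sum_(i <- r) F i) = \sum_(i <- r) Chat pi (F i).
Proof.
elim: r => [|a r IH]; first by rewrite !big_nil Chat0.
by rewrite !big_cons ChatD IH.
Qed.

Lemma proj_Chat (C : numClosedFieldType) (n d N : nat)
    (pi : 'M[C]_n -> 'M[C]_d)
    (W : 'I_N.+1 -> {vspace 'M[C]_(d, n)})
    (Pi : 'I_N.+1 -> 'M[C]_(d, n) -> 'M[C]_(d, n))
    (m : 'I_N.+1 -> C) :
  orth_decomp pi W ->
  (forall k, is_orth_proj (W k) (Pi k)) ->
  (forall k w, w \in W k -> Chat pi w = m k *: w) ->
  forall k x, Pi k (Chat pi x) = m k *: Pi k x.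
Proof.
move=> [hsum [horth _]] hP hC k x.
have : x \in (\sum_(l < N.+1) W l)%VS by rewrite hsum memvf.
move/memv_sumP => [xs hxs ->].
have hPk : forall l, Pi k (xs l) = if l == k then xs k else 0.
  move=> l; case: eqP => [-> | /eqP nlk].
    by apply: proj_uniq; [apply: hP | apply: hxs | move=> v vW; rewrite subrr inner0r].
  apply: proj_uniq => //; first by rewrite rpred0.
  move=> v vW; rewrite subr0; apply: (horth k l) => //; first by rewrite eq_sym.
  exact: hxs.
rewrite Chat_sum (eq_bigr (fun l => m l *: xs l)); last by move=> l _; rewrite (hC l) // hxs.
rewrite !(proj_sum _ _ _ _ _ _ _ _ (hP k)) (bigD1 k) //= [X in _ = _ *: X](bigD1 k) //=.
rewrite (proj_scale _ _ _ _ _ _ _ (hP k)) hPk eqxx big1; last first.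
  by move=> l /negbTE nlk; rewrite (proj_scale _ _ _ _ _ _ _ (hP k)) hPk nlk scaler0.
rewrite big1; last by move=> l /negbTE nlk; rewrite hPk nlk.
by rewrite !addr0.
Qed.

Theorem lemma3p4 (C : numClosedFieldType) (n d N : nat)
    (pi : 'M[C]_n -> 'M[C]_d)
    (W : 'I_N.+1 -> {vspace 'M[C]_(d, n)})
    (Pi : 'I_N.+1 -> 'M[C]_(d, n) -> 'M[C]_(d, n))
    (m : 'I_N.+1 -> C) :
  spin_rep pi -> unitary_rep pi -> irreducible_rep pi ->
  orth_decomp pi W ->
  (forall k, is_orth_proj (W k) (Pi k)) ->
  (forall k w, w \in W k -> Chat pi w = m k *: w) ->
  forall (k : 'I_N.+1) (u : 'cV[C]_n) (e : 'I_n -> 'cV[C]_n),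
    real_mx u -> orthonormal_basis e ->
    forall phi : 'cV[C]_d,
      - (4 : C)^-1 *: \sum_(i < n) clif_hom (Pi k) (e i) (pi (clif_br (e i) u) *m phi)
      = m k *: clif_hom (Pi k) u phi.
Proof.
move=> hpi _ _ hdec hP hC k u e ru he phi.
rewrite /clif_hom -(proj_Chat _ _ _ _ _ _ _ _ hdec hP hC) Chat_comp //.
rewrite -(basis_indep _ _ _ _ _ _ _ hpi ru he) (proj_scale _ _ _ _ _ _ _ (hP k)) (proj_sum _ _ _ _ _ _ _ _ (hP k)).
by [].
Qed.
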